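(* Let $n\geq 3$ and let $\mathcal H_n$ be the universal homogeneous $K_n$-free graph. Then $\mathcal H_n$ is IY-homogeneous for every $\mathrm{Y}\in\{\mathrm{H},\mathrm{I},\mathrm{A},\mathrm{E},\mathrm{B},\mathrm{M}\}$, and $\mathcal H_n$ is not XY-homogeneous for any $\mathrm{X}\in\{\mathrm{H},\mathrm{M}\}$ and any $\mathrm{Y}\in\{\mathrm{H},\mathrm{I},\mathrm{A},\mathrm{E},\mathrm{B},\mathrm{M}\}$.
   Context: All graphs are undirected and loopless; subgraphs are induced. $\mathcal H_n$ is the Fraïssé limit of the class of finite $K_n$-free graphs; it is the unique countable graph such that for all finite disjoint $A,B\subseteq\mathcal H_n$ with $A$ $K_{n-1}$-free there is a vertex adjacent to every vertex of $A$ and to no vertex of $B$. For $\mathrm{X}\in\{\mathrm{H},\mathrm{M},\mathrm{I}\}$ an X-morphism is a homomorphism, monomorphism (injective homomorphism), or isomorphism onto its image. For $\mathrm{Y}\in\{\mathrm{H},\mathrm{I},\mathrm{A},\mathrm{E},\mathrm{B},\mathrm{M}\}$, a Y-morphism $G\to G$ is, respectively, an endomorphism, a self-embedding, an automorphism, a surjective endomorphism, a bijective endomorphism, or an injective endomorphism. $G$ is XY-homogeneous if every X-morphism between finite induced subgraphs of $G$ is the restriction of a Y-morphism $G\to G$. *)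

(* Defs.v *)
From Stdlib Require Import List Arith.
Import ListNotations.

Record graph (V : Type) := {
  adj : V -> V -> Prop;
  adj_sym : forall x y, adj x y -> adj y x;
  adj_irrefl : forall x, ~ adj x x }.
Arguments adj {V} g _ _.

Section Graphs.
Context {V : Type} (G : graph V).

Definition clique (L : list V) : Prop :=
  NoDup L /\ forall x y, In x L -> In y L -> x <> y -> adj G x y.

Definition Kfree_on (m : nat) (A : list V) : Prop :=
  ~ exists L, clique L /\ length L = m /\ forall x, In x L -> In x A.

Definition Kfree (m : nat) : Prop :=
  ~ exists L, clique L /\ length L = m.

Definition countable_type : Prop :=
  exists f : V -> nat, forall x y, f x = f y -> x = y.

Definition henson_extension (n : nat) : Prop :=
  forall A B : list V,
    (forall x, In x A -> ~ In x B) ->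
    Kfree_on (n - 1) A ->
    exists v, ~ In v B /\
      (forall a, In a A -> adj G v a) /\ (forall b, In b B -> ~ adj G v b).

(* G is (isomorphic to) the universal homogeneous K_n-free graph H_n *)
Definition is_henson (n : nat) : Prop :=
  countable_type /\ Kfree n /\ henson_extension n.

Definition hom_on (A : list V) (f : V -> V) : Prop :=
  forall x y, In x A -> In y A -> adj G x y -> adj G (f x) (f y).
Definition inj_on (A : list V) (f : V -> V) : Prop :=
  forall x y, In x A -> In y A -> f x = f y -> x = y.
Definition emb_on (A : list V) (f : V -> V) : Prop :=
  inj_on A f /\
  forall x y, In x A -> In y A -> (adj G x y <-> adj G (f x) (f y)).

Inductive Xkind := XH | XM | XI.
Inductive Ykind := YH | YI | YA | YE | YB | YM.

Definition Xmorphism (X : Xkind) (A : list V) (f : V -> V) : Prop :=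
  match X with
  | XH => hom_on A f
  | XM => hom_on A f /\ inj_on A f
  | XI => emb_on A f
  end.

Definition endo (g : V -> V) : Prop := forall x y, adj G x y -> adj G (g x) (g y).
Definition injective (g : V -> V) : Prop := forall x y, g x = g y -> x = y.
Definition surjective (g : V -> V) : Prop := forall y, exists x, g x = y.
Definition self_embedding (g : V -> V) : Prop :=
  injective g /\ forall x y, adj G x y <-> adj G (g x) (g y).

Definition Ymorphism (Y : Ykind) (g : V -> V) : Prop :=
  match Y with
  | YH => endo g
  | YI => self_embedding g
  | YA => self_embedding g /\ surjective g
  | YE => endo g /\ surjective g
  | YB => endo g /\ injective g /\ surjective g
  | YM => endo g /\ injective g
  end.

(* XY-homogeneity: every X-morphism between finite induced subgraphs
   (given as f restricted to a finite vertex list A) extends to a Y-morphism *)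
Definition XY_homogeneous (X : Xkind) (Y : Ykind) : Prop :=
  forall (A : list V) (f : V -> V), Xmorphism X A f ->
    exists g : V -> V, Ymorphism Y g /\ forall x, In x A -> g x = f x.

End Graphs.

(* Main.v *)
Require Import Defs.
From Stdlib Require Import List Arith Lia Classical ClassicalEpsilon.
Import ListNotations.

Section Gen.
Context {V : Type} (G : graph V).

Lemma FOP_clique L : ForallOrdPairs (adj G) L -> clique G L.
Proof.
  induction 1 as [|a l Ha Hl IH].
  - split; [constructor | intros x y []].
  - destruct IH as [Hnd Hadj]. split.
    + constructor; auto. intro Hin. rewrite Forall_forall in Ha.
      exact (adj_irrefl _ G a (Ha a Hin)).
    + rewrite Forall_forall in Ha.
      intros x y [<-|Hx] [<-|Hy] Hne.
      * congruence.
      * auto.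
      * apply adj_sym; auto.
      * auto.
Qed.

Lemma clique_FOP L : clique G L -> ForallOrdPairs (adj G) L.
Proof.
  induction L as [|a l IH]; intros [Hnd Hadj]; constructor.
  - inversion Hnd; subst. rewrite Forall_forall. intros y Hy.
    apply Hadj; simpl; auto. intro; subst; contradiction.
  - inversion Hnd; subst. apply IH. split; auto.
    intros; apply Hadj; simpl; auto.
Qed.

Lemma Forall2_Forall_r (R : V -> V -> Prop) (Q : V -> Prop) l l' :
  Forall2 R l l' -> (forall y x, R y x -> Q x) -> Forall Q l'.
Proof. induction 1; constructor; eauto. Qed.

Lemma FOP_transfer (R : V -> V -> Prop)
  (Hr : forall y x y' x', R y x -> R y' x' -> adj G y y' -> adj G x x') L L' :
  Forall2 R L L' -> ForallOrdPairs (adj G) L -> ForallOrdPairs (adj G) L'.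
Proof.
  induction 1 as [|y x l l' Hyx H2 IH]; intro Hf; constructor; inversion Hf; subst.
  - clear IH Hf H3. induction H2; constructor; inversion H1; subst; eauto.
  - auto.
Qed.

Lemma FOP_map (g : V -> V) L : endo G g -> ForallOrdPairs (adj G) L ->
  ForallOrdPairs (adj G) (map g L).
Proof.
  intros He; induction 1; simpl; constructor; auto.
  apply Forall_map. eapply Forall_impl; [|eassumption]. intros; apply He; auto.
Qed.

Definition dec (Q : Prop) : bool := if excluded_middle_informative Q then true else false.
Lemma decP Q : dec Q = true <-> Q.
Proof. unfold dec; destruct (excluded_middle_informative Q); split; auto; discriminate. Qed.
Lemma decN Q : dec Q = false <-> ~ Q.
Proof. unfold dec; destruct (excluded_middle_informative Q); split; auto; try discriminate; tauto. Qed.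

Definition piso (P : list (V * V)) : Prop :=
  forall x y x' y', In (x, y) P -> In (x', y') P ->
    (x = x' <-> y = y') /\ (adj G x x' <-> adj G y y').

Definition swapP (P : list (V * V)) := map (fun p => (snd p, fst p)) P.
Lemma in_swap P x y : In (x, y) (swapP P) <-> In (y, x) P.
Proof.
  unfold swapP; rewrite in_map_iff; split.
  - intros [[a b] [E H]]; simpl in E; inversion E; subst; auto.
  - intro H; exists (y, x); auto.
Qed.
Lemma piso_swap P : piso P -> piso (swapP P).
Proof.
  intros H x y x' y' H1 H2. rewrite in_swap in H1, H2.
  destruct (H _ _ _ _ H1 H2). split; symmetry; auto.
Qed.

Section Ext.
Variable n : nat.
Hypothesis Hn : 1 <= n.
Hypothesis HK : Kfree G n.
Hypothesis HE : henson_extension G n.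

Lemma forth P z : piso P -> exists P', piso P' /\ incl P P' /\ exists w, In (z, w) P'.
Proof.
  intro HP.
  destruct (classic (exists w, In (z, w) P)) as [Hex|Hnz].
  { exists P; split; auto; split; auto. apply incl_refl. }
  set (Aset := map snd (filter (fun p => dec (adj G z (fst p))) P)).
  set (Bset := map snd (filter (fun p => negb (dec (adj G z (fst p)))) P)).
  assert (HA : forall y, In y Aset <-> exists x, In (x, y) P /\ adj G z x).
  { intro y; unfold Aset; rewrite in_map_iff; split.
    - intros [[x y'] [E Hf]]; simpl in E; subst. rewrite filter_In in Hf.
      destruct Hf as [Hf1 Hf2]. rewrite decP in Hf2. eauto.
    - intros [x [H1 H2]]. exists (x, y); split; auto. rewrite filter_In; split; auto.
      simpl; rewrite decP; auto. }
  assert (HB : forall y, In y Bset <-> exists x, In (x, y) P /\ ~ adj G z x).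
  { intro y; unfold Bset; rewrite in_map_iff; split.
    - intros [[x y'] [E Hf]]; simpl in E; subst. rewrite filter_In in Hf.
      destruct Hf as [Hf1 Hf2]. simpl in Hf2.
      destruct (dec (adj G z x)) eqn:E; [discriminate|]. rewrite decN in E. eauto.
    - intros [x [H1 H2]]. exists (x, y); split; auto. rewrite filter_In; split; auto.
      simpl. assert (E : dec (adj G z x) = false) by (rewrite decN; auto).
      rewrite E; auto. }
  destruct (HE Aset Bset) as [w [HwB [HwA HwN]]].
  - intros y HyA HyB. apply HA in HyA; apply HB in HyB.
    destruct HyA as [x1 [H1 H1']], HyB as [x2 [H2 H2']].
    destruct (HP _ _ _ _ H1 H2) as [[_ E] _]. rewrite E in H1'; auto.
  - intros [L [Hcl [Hlen Hin]]].
    assert (Hlift : exists L', Forall2 (fun y x => In (x, y) P /\ adj G z x) L L').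
    { clear Hcl Hlen. induction L as [|y L IH].
      - exists []; constructor.
      - destruct IH as [L' HL']. { intros; apply Hin; simpl; auto. }
        destruct (proj1 (HA y) (Hin y (or_introl eq_refl))) as [x Hx].
        exists (x :: L'); constructor; auto. }
    destruct Hlift as [L' HL'].
    apply HK. exists (z :: L'). split.
    + apply FOP_clique. constructor.
      * eapply Forall2_Forall_r; [eassumption|]. simpl; intros y x [_ h]; exact h.
      * eapply FOP_transfer; [|eassumption|apply clique_FOP; auto].
        intros y x y' x' [h1 _] [h2 _] h3. apply (HP _ _ _ _ h1 h2); auto.
    + simpl. apply Forall2_length in HL'. lia.
  - assert (Hnz' : forall y, ~ In (z, y) P) by (intros y Hy; apply Hnz; eauto).
    assert (Hwadj : forall x y, In (x, y) P -> (adj G z x <-> adj G w y)).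
    { intros x y Hxy. destruct (classic (adj G z x)) as [h|h].
      - split; auto; intros _. apply HwA, HA; eauto.
      - split; [tauto|]. intros h'. exfalso. apply (HwN y); [apply HB; eauto|auto]. }
    assert (Hwr : forall x, ~ In (x, w) P).
    { intros x Hx. destruct (classic (adj G z x)) as [h|h].
      - apply (adj_irrefl _ G w). apply HwA, HA; eauto.
      - apply HwB, HB; eauto. }
    exists ((z, w) :: P). split; [|split].
    + intros x y x' y' [E1|H1] [E2|H2].
      * inversion E1; inversion E2; subst. split; [tauto|].
        split; intro h; exfalso; eapply adj_irrefl; eauto.
      * inversion E1; subst. split.
        -- split; intro; subst; exfalso; [eapply Hnz'|eapply Hwr]; eauto.
        -- auto.
      * inversion E2; subst. split.
        -- split; intro; subst; exfalso; [eapply Hnz'|eapply Hwr]; eauto.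
        -- split; intro h; apply adj_sym; apply adj_sym in h; apply (Hwadj _ _ H1); auto.
      * auto.
    + intros p Hp; simpl; auto.
    + exists w; simpl; auto.
Qed.

Lemma back P z : piso P -> exists P', piso P' /\ incl P P' /\ exists x, In (x, z) P'.
Proof.
  intro HP. destruct (forth (swapP P) z (piso_swap P HP)) as [Q [HQ [Hi [w Hw]]]].
  exists (swapP Q). split; [apply piso_swap; auto|split].
  - intros [a b] Hab. apply in_swap, Hi, in_swap; auto.
  - exists w; apply in_swap; auto.
Qed.

Lemma ext_ex P z : piso P -> exists P', piso P' /\ incl P P' /\
  (exists w, In (z, w) P') /\ (exists x, In (x, z) P').
Proof.
  intro HP. destruct (forth P z HP) as [Q [HQ [Hi [w Hw]]]].
  destruct (back Q z HQ) as [R [HR [Hi' [x Hx]]]].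
  exists R; split; auto; split; [eapply incl_tran; eauto|split; eauto].
Qed.
End Ext.

Section Limit.
Variable n : nat.
Hypothesis Hn : 1 <= n.
Hypothesis HK : Kfree G n.
Hypothesis HE : henson_extension G n.
Variable enc : V -> nat.
Hypothesis Henc : forall x y, enc x = enc y -> x = y.
Variable v0 : V.
Variable P0 : list (V * V).
Hypothesis HP0 : piso P0.

Definition ext (P : list (V * V)) (z : V) : list (V * V) :=
  epsilon (inhabits P) (fun P' => piso P -> piso P' /\ incl P P' /\
    (exists w, In (z, w) P') /\ (exists x, In (x, z) P')).

Lemma ext_spec P z : piso P -> piso (ext P z) /\ incl P (ext P z) /\
    (exists w, In (z, w) (ext P z)) /\ (exists x, In (x, z) (ext P z)).
Proof.
  intro HP. generalize HP. unfold ext. apply epsilon_spec.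
  destruct (ext_ex n Hn HK HE P z HP) as [P' H]. exists P'; auto.
Qed.

Definition zpick (m : nat) : V := epsilon (inhabits v0) (fun z => enc z = m).
Lemma zpick_enc z : zpick (enc z) = z.
Proof. apply Henc. unfold zpick. apply epsilon_spec. eauto. Qed.

Fixpoint seqP (m : nat) : list (V * V) :=
  match m with 0 => P0 | S m => ext (seqP m) (zpick m) end.

Lemma seq_piso m : piso (seqP m).
Proof. induction m; simpl; auto. apply ext_spec; auto. Qed.

Lemma seq_mono m k : m <= k -> incl (seqP m) (seqP k).
Proof.
  induction 1; [apply incl_refl|]. eapply incl_tran; [eassumption|].
  simpl. apply ext_spec, seq_piso.
Qed.

Lemma seq_dom z : exists w, In (z, w) (seqP (S (enc z))).
Proof.
  simpl. pose proof (ext_spec (seqP (enc z)) (zpick (enc z)) (seq_piso _)) as H.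
  rewrite zpick_enc in H |- *. apply H.
Qed.
Lemma seq_ran z : exists x, In (x, z) (seqP (S (enc z))).
Proof.
  simpl. pose proof (ext_spec (seqP (enc z)) (zpick (enc z)) (seq_piso _)) as H.
  rewrite zpick_enc in H |- *. apply H.
Qed.

Definition glim (z : V) : V :=
  epsilon (inhabits z) (fun w => In (z, w) (seqP (S (enc z)))).
Lemma glim_spec z : In (z, glim z) (seqP (S (enc z))).
Proof. unfold glim. apply epsilon_spec, seq_dom. Qed.

Lemma glim_common z1 z2 : piso (seqP (S (enc z1) + S (enc z2))) /\
  In (z1, glim z1) (seqP (S (enc z1) + S (enc z2))) /\
  In (z2, glim z2) (seqP (S (enc z1) + S (enc z2))).
Proof.
  split; [apply seq_piso|split].
  - apply (seq_mono (S (enc z1))); [lia|apply glim_spec].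
  - apply (seq_mono (S (enc z2))); [lia|apply glim_spec].
Qed.

Lemma glim_aut : self_embedding G glim /\ surjective glim /\
  forall x y, In (x, y) P0 -> glim x = y.
Proof.
  split; [split|split].
  - intros x y E. destruct (glim_common x y) as [Hp [H1 H2]].
    apply (Hp _ _ _ _ H1 H2); auto.
  - intros x y. destruct (glim_common x y) as [Hp [H1 H2]].
    apply (Hp _ _ _ _ H1 H2); auto.
  - intro y. destruct (seq_ran y) as [x Hx]. exists x.
    pose proof (glim_spec x) as Hg.
    set (K := S (enc x) + S (enc y)).
    assert (A1 : In (x, glim x) (seqP K)) by (apply (seq_mono (S (enc x))); [lia|auto]).
    assert (A2 : In (x, y) (seqP K)) by (apply (seq_mono (S (enc y))); [lia|auto]).
    apply (seq_piso K _ _ _ _ A1 A2); auto.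
  - intros x y Hxy.
    pose proof (glim_spec x) as Hg.
    assert (A2 : In (x, y) (seqP (S (enc x)))) by (apply (seq_mono 0); [lia|auto]).
    apply (seq_piso _ _ _ _ _ Hg A2); auto.
Qed.
End Limit.
End Gen.

Lemma Ymorph_endo {V : Type} (G : graph V) Y g : Ymorphism G Y g -> endo G g.
Proof.
  unfold endo; destruct Y; simpl; intro H0.
  - exact H0.
  - intros x y h; apply (proj1 (proj2 H0 x y)); auto.
  - intros x y h; apply (proj1 (proj2 (proj1 H0) x y)); auto.
  - apply H0.
  - apply H0.
  - apply H0.
Qed.

Lemma build_C {V : Type} (G : graph V) n (Hn : 3 <= n) (HE : henson_extension G n)
  a b : ~ adj G a b -> a <> b -> forall k, k <= n - 2 -> exists C, length C = k /\
  ForallOrdPairs (adj G) C /\ Forall (adj G a) C /\ Forall (adj G b) C.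
Proof.
  intros Hab Hne. induction k as [|k IH]; intro Hk.
  - exists []; repeat split; constructor.
  - destruct IH as [C [Hl [HF [Ha Hb]]]]; [lia|].
    destruct (HE (a :: b :: C) []) as [v [_ [Hv _]]].
    + intros x _ [].
    + intros [L [[Hnd Hcl] [HL Hin]]].
      destruct (classic (In a L)) as [HaL|HaL].
      * assert (Hi : incl L (a :: C)).
        { intros x Hx. destruct (Hin x Hx) as [E|[E|E]]; simpl; auto.
          subst. exfalso. apply Hab. apply Hcl; auto. }
        apply NoDup_incl_length in Hi; auto. simpl in Hi. lia.
      * assert (Hi : incl L (b :: C)).
        { intros x Hx. destruct (Hin x Hx) as [E|[E|E]]; simpl; auto.
          subst. contradiction. }
        apply NoDup_incl_length in Hi; auto. simpl in Hi. lia.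
    + exists (v :: C). split; [simpl; lia|]. split; [|split].
      * constructor; auto. rewrite Forall_forall; intros; apply Hv; simpl; auto.
      * constructor; auto. apply adj_sym, Hv; simpl; auto.
      * constructor; auto. apply adj_sym, Hv; simpl; auto.
Qed.

Theorem mainTheorem9 (n : nat) (V : Type) (G : graph V) :
  3 <= n -> is_henson G n ->
  (forall Y : Ykind, XY_homogeneous G XI Y) /\
  (forall X : Xkind, (X = XH \/ X = XM) ->
     forall Y : Ykind, ~ XY_homogeneous G X Y).
Proof.
  intros Hn [[enc Henc] [HK HE]].
  assert (Hsmall : forall x, Kfree_on G (n - 1) [x]).
  { intros x [L [[Hnd _] [HL Hin]]].
    assert (Hi : incl L [x]) by (intros y Hy; apply Hin; auto).
    apply NoDup_incl_length in Hi; auto. simpl in Hi. lia. }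
  destruct (HE [] []) as [v0 _].
  { intros x []. }
  { intros [L [_ [HL Hin]]]. destruct L as [|y L]; simpl in HL; [lia|].
    exact (Hin y (or_introl eq_refl)). }
  split.
  - intros Y A f [Hinj Hadj].
    set (P0 := map (fun a => (a, f a)) A).
    assert (HinP : forall x y, In (x, y) P0 <-> In x A /\ y = f x).
    { intros x y; unfold P0; rewrite in_map_iff; split.
      - intros [a [E Ha]]; inversion E; subst; auto.
      - intros [Hx ->]; exists x; auto. }
    assert (HP0 : piso G P0).
    { intros x y x' y' H1 H2. apply HinP in H1, H2.
      destruct H1 as [H1 ->], H2 as [H2 ->]. split.
      - split; [intros ->; auto|apply Hinj; auto].
      - apply Hadj; auto. }
    destruct (glim_aut G n ltac:(lia) HK HE enc Henc v0 P0 HP0) as [[Hi Ha] [Hs Hag]].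
    set (g := glim G enc v0 P0) in *.
    assert (Hext : forall x, In x A -> g x = f x) by (intros x Hx; apply Hag, HinP; auto).
    exists g. split; auto.
    assert (He : endo G g) by (intros x y h; apply (proj1 (Ha x y)); auto).
    destruct Y; simpl; repeat split; auto. all: try (intros x y h; apply (proj1 (Ha x y)); auto). all: intro h; apply (proj2 (Ha x y)); auto.
  - intros X HX Y HXY.
    destruct (HE [] [v0]) as [b [Hb1 [_ Hb2]]].
    { intros x []. }
    { intros [L [_ [HL Hin]]]. destruct L as [|y L]; simpl in HL; [lia|].
      exact (Hin y (or_introl eq_refl)). }
    set (a := v0) in *.
    assert (Hba : b <> a) by (intro; subst; apply Hb1; simpl; auto).
    assert (Hab : ~ adj G a b) by (intro h; apply (Hb2 a); simpl; auto; apply adj_sym; auto).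
    destruct (HE [a] []) as [y [_ [Hy _]]].
    { intros x _ []. }
    { apply Hsmall. }
    assert (Hya : adj G y a) by (apply Hy; simpl; auto).
    set (f := fun z => if excluded_middle_informative (z = a) then a else y).
    assert (Hfa : f a = a).
    { unfold f; destruct (excluded_middle_informative (a = a)); congruence. }
    assert (Hfb : f b = y).
    { unfold f; destruct (excluded_middle_informative (b = a)); congruence. }
    assert (Hhom : hom_on G [a; b] f).
    { intros u w [<-|[<-|[]]] [<-|[<-|[]]] h.
      - exfalso; eapply adj_irrefl; eauto.
      - contradiction.
      - apply adj_sym in h; contradiction.
      - exfalso; eapply adj_irrefl; eauto. }
    assert (Hinj : inj_on [a; b] f).
    { intros u w [<-|[<-|[]]] [<-|[<-|[]]] h; auto.
      - rewrite Hfa, Hfb in h. rewrite h in Hya. exfalso; eapply adj_irrefl; eauto.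
      - rewrite Hfa, Hfb in h. rewrite h in Hya. exfalso; eapply adj_irrefl; eauto. }
    destruct (HXY [a; b] f) as [g [Hg Hgf]].
    { destruct HX as [-> | ->]; simpl; auto. }
    apply Ymorph_endo in Hg.
    assert (Hga : g a = a) by (rewrite Hgf; simpl; auto).
    assert (Hgb : g b = y) by (rewrite Hgf; simpl; auto).
    destruct (build_C G n Hn HE a b Hab (not_eq_sym Hba) (n - 2) (le_n _))
      as [C [HCl [HCF [HCa HCb]]]].
    apply HK. exists (g a :: g b :: map g C). split.
    + apply FOP_clique. constructor; [constructor|constructor].
      * rewrite Hga, Hgb; apply adj_sym; auto.
      * apply Forall_map. eapply Forall_impl; [|exact HCa]. intros; apply Hg; auto.
      * apply Forall_map. eapply Forall_impl; [|exact HCb]. intros; apply Hg; auto.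
      * apply FOP_map; auto.
    + simpl. rewrite length_map. lia.
Qed.
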